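(* Let $\Sigma$ and $\Gamma$ be finite alphabets, each with at least two letters, and let $w \in \Sigma^+$. The following are equivalent: 1. $\mathrm{E}_{\mathcal{I}}(w) = \infty$. 2. $\mathrm{E}_{\mathcal{I}}(w) > |w|$. 3. There exist an injective morphism $h:\Sigma^*\to\Gamma^*$ and a letter $a \in \mathrm{alph}(w)$ such that $h(w) = x^r$ for some primitive word $x \in \Gamma^*$ and some rational $r$, and $|h(a)| \ge |x|$. 4. There exist an integer $k \ge 0$, a letter $a \in \Sigma$, words $w_1, w_2, w_3 \in (\Sigma \setminus \{a\})^*$ and an injective morphism $h:\Sigma^*\to\Gamma^*$ such that $w = w_1 (a w_2)^k a w_3$, $h(w_1)$ and $h(w_2)$ are suffix-comparable, and $h(w_2)$ and $h(w_3)$ are prefix-comparable.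
   Context: For a nonempty word $v$ and integer $p\ge 0$, $v^{p/|v|}$ denotes the prefix of length $p$ of the infinite word $vvv\cdots$. For a nonempty finite word $u$, its (fractional) exponent is $\mathrm{E}(u) = \sup\{ r \in \mathbb{Q} : u = v^r \text{ for some nonempty word } v\}$. A word $x$ is primitive if it is not of the form $y^k$ with $k \ge 2$ an integer. A morphism $h:\Sigma^*\to\Gamma^*$ satisfies $h(uv)=h(u)h(v)$ for all words $u,v$. $\mathcal{I}$ is the set of injective morphisms $\Sigma^* \to \Gamma^*$, and $\mathrm{E}_{\mathcal{I}}(w) = \sup\{\mathrm{E}(h(w)) : h \in \mathcal{I}\}$. $\mathrm{alph}(w)$ is the set of letters occurring in $w$. Words $u,v$ are prefix-comparable if $u$ is a prefix of $vs$ for some word $s$; suffix-comparable if $u$ is a suffix of $pv$ for some word $p$. *)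

(* Defs.v *)
From HB Require Import structures.
From mathcomp Require Import all_boot all_order all_algebra.
From mathcomp Require Import boolp classical_sets reals constructive_ereal ereal.
Set Implicit Arguments. Unset Strict Implicit. Unset Printing Implicit Defensive.
Import Order.TTheory GRing.Theory Num.Theory.
Local Open Scope ring_scope.
Local Open Scope classical_set_scope.

(* v^{p/|v|}: prefix of length p of the infinite word v v v ... *)
Definition pow_frac {T : Type} (v : seq T) (p : nat) : seq T :=
  take p (flatten (nseq p v)).

Definition is_pow {T : Type} (u v : seq T) (r : rat) : Prop :=
  v <> [::] /\ exists p : nat, r = (p%:R / (size v)%:R) /\ u = pow_frac v p.

Definition exponent (R : realType) {T : Type} (u : seq T) : \bar R :=
  ereal_sup [set ((ratr r : R)%:E) | r in [set r : rat | exists v, is_pow u v r]].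

Definition is_morphism {S T : Type} (h : seq S -> seq T) : Prop :=
  forall u v, h (u ++ v) = h u ++ h v.

Definition inj_morphism {S T : Type} (h : seq S -> seq T) : Prop :=
  is_morphism h /\ injective h.

Definition exponent_I (R : realType) (S T : Type) (w : seq S) : \bar R :=
  ereal_sup [set exponent R (h w) | h in [set h : seq S -> seq T | inj_morphism h]].

Definition primitive {T : Type} (x : seq T) : Prop :=
  ~ exists (y : seq T) (k : nat), (2 <= k)%N /\ x = flatten (nseq k y).

Definition prefix_comparable {T : Type} (u v : seq T) : Prop :=
  exists s t : seq T, v ++ s = u ++ t.

Definition suffix_comparable {T : Type} (u v : seq T) : Prop :=
  exists p t : seq T, p ++ v = t ++ u.

(* Main.v *)
Require Import Defs.
From mathcomp Require Import all_boot all_order all_algebra.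
From mathcomp Require Import boolp classical_sets reals constructive_ereal ereal.
From HB Require Import structures.
From mathcomp Require Import zify lra.
Set Implicit Arguments. Unset Strict Implicit. Unset Printing Implicit Defensive.
Import Order.TTheory GRing.Theory Num.Theory.


Section Words.
Variable T : Type.
Implicit Types x y u v : seq T.

Definition pw x m := flatten (nseq m x).

Lemma size_pw x m : size (pw x m) = m * size x.
Proof. by elim: m => //= m IH; rewrite /pw /= size_cat -/(pw x m) IH mulSn. Qed.

Lemma pwD x m1 m2 : pw x (m1 + m2) = pw x m1 ++ pw x m2.
Proof. by rewrite /pw nseqD flatten_cat. Qed.

Lemma pwS x m : pw x m.+1 = x ++ pw x m.
Proof. by []. Qed.

Lemma pwSr x m : pw x m.+1 = pw x m ++ x.
Proof. by rewrite -addn1 pwD /pw /= cats0. Qed.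

Lemma pwM x m k : pw (pw x m) k = pw x (m * k).
Proof.
elim: k => [|k IH]; first by rewrite muln0.
by rewrite pwS IH mulnS pwD.
Qed.

Lemma pw_shift x y m : x ++ pw (y ++ x) m = pw (x ++ y) m ++ x.
Proof.
elim: m => [|m IH]; first by rewrite /pw /= cats0.
by rewrite pwS [pw (x ++ y) _]pwS -!catA IH.
Qed.

Lemma take_pw x m m' P : P <= m * size x -> P <= m' * size x ->
  take P (pw x m) = take P (pw x m').
Proof.
wlog le: m m' / m <= m'.
  move=> H h1 h2; case: (leqP m m') => l; first exact: H.
  by symmetry; apply: H => //; exact: ltnW.
move=> h1 _; rewrite -(subnKC le) pwD takel_cat // size_pw //.
Qed.

Lemma pow_frac_pw x W rest M : x <> [::] -> W ++ rest = pw x M ->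
  pow_frac x (size W) = W.
Proof.
move=> xn E.
have sx : 0 < size x by destruct x.
have hM : size W <= M * size x by rewrite -size_pw -E size_cat leq_addr.
rewrite /pow_frac -/(pw x (size W)) (@take_pw x (size W) M) //.
  by rewrite -E take_size_cat.
by rewrite leq_pmulr.
Qed.

Lemma comm_pw u v : u ++ v = v ++ u -> exists z k l, u = pw z k /\ v = pw z l.
Proof.
have [N hN] : exists N, size u + size v <= N by exists (size u + size v).
elim: N u v hN => [|N IH] u v.
  case: u => [|? ?] //; case: v => [|? ?] //= _ _. by exists [::], 0, 0.
move=> hs E.
wlog le: u v hs E / size u <= size v.
  move=> H; case: (leqP (size u) (size v)) => l; first exact: H.
  have hs' : size v + size u <= N.+1 by rewrite addnC.
  have [z [k [l' [e1 e2]]]] := H v u hs' (esym E) (ltnW l).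
  by exists z, l', k.
case: u hs E le => [|c u'] hs E le.
  by exists v, 0, 1; rewrite /pw /= cats0.
set u := c :: u' in hs E le *.
have ev : v = u ++ drop (size u) v.
  have := congr1 (take (size u)) E; rewrite take_size_cat // takel_cat //.
  by move=> H; rewrite {1}H cat_take_drop.
set v' := drop (size u) v in ev.
have E' : u ++ v' = v' ++ u.
  have := congr1 (drop (size u)) E.
  by rewrite {1}ev drop_size_cat // ev -catA drop_size_cat.
have [|z [k [l [e1 e2]]]] := IH u v' _ E'.
  move: hs; rewrite ev size_cat /u /=; lia.
by exists z, k, (k + l); rewrite ev e1 e2 pwD.
Qed.

End Words.


Section Occ.
Variables (T : Type) (x0 : T) (x : seq T).
Hypothesis xpos : 0 < size x.
Local Notation n := (size x).
Definition X i := nth x0 x (i %% n).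

Lemma X_mod i : X (i %% n) = X i.
Proof. by rewrite /X modn_mod. Qed.

Lemma X_modD i j : X (i %% n + j) = X (i + j).
Proof. by rewrite /X modnDml. Qed.

Lemma X_n i : X (i + n) = X i.
Proof. by rewrite /X modnDr. Qed.

Lemma nth_pw m i : i < m * n -> nth x0 (pw x m) i = X i.
Proof.
elim: m i => [|m IH] i //.
rewrite pwS nth_cat mulSn => hi.
case: ltnP => h; first by rewrite /X modn_small.
rewrite IH; last by lia.
by rewrite -X_n subnK.
Qed.

Lemma nth_pow_frac P i : i < P -> nth x0 (pow_frac x P) i = X i.
Proof.
move=> hi; rewrite /pow_frac nth_take // -/(pw x P) nth_pw //.
by apply: (leq_trans hi); rewrite leq_pmulr.
Qed.

Definition occ (y : seq T) i := forall j, j < size y -> nth x0 y j = X (i + j).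

Lemma occ_pow_frac P : occ (pow_frac x P) 0.
Proof.
move=> j; rewrite size_takel ?add0n; first exact: nth_pow_frac.
by rewrite -/(pw x P) size_pw leq_pmulr.
Qed.

Lemma occ_catl u v i : occ (u ++ v) i -> occ u i.
Proof. by move=> H j hj; rewrite -(H j) ?nth_cat ?hj // size_cat ltn_addr. Qed.

Lemma occ_catr u v i : occ (u ++ v) i -> occ v (i + size u).
Proof.
move=> H j hj; have := H (size u + j).
rewrite size_cat ltn_add2l nth_cat -addnA => /(_ hj).
by rewrite ltnNge leq_addr /= addKn.
Qed.

Lemma occ_cat u v i : occ u i -> occ v (i + size u) -> occ (u ++ v) i.
Proof.
move=> Hu Hv j; rewrite size_cat => hj; rewrite nth_cat; case: ltnP => h; first exact: Hu.
rewrite Hv; last by lia.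
by rewrite -addnA subnKC.
Qed.

Lemma occ_mod y i i' : i %% n = i' %% n -> occ y i -> occ y i'.
Proof. by move=> e H j hj; rewrite H // -X_modD e X_modD. Qed.

Lemma occ_uniq u v i : occ u i -> occ v i -> size u = size v -> u = v.
Proof.
move=> Hu Hv e; apply: (eq_from_nth (x0 := x0) e) => j hj.
by rewrite Hu // Hv // -e.
Qed.

Lemma occ_take y i k : occ y i -> occ (take k y) i.
Proof.
move=> H; rewrite -(cat_take_drop k y) in H; exact: occ_catl H.
Qed.

Lemma occ_drop y i k : k <= size y -> occ y i -> occ (drop k y) (i + k).
Proof.
move=> hk H; rewrite -(cat_take_drop k y) in H.
by have := occ_catr H; rewrite size_takel.
Qed.

Lemma occ_prefix_comp u v i j : occ u i -> occ v j -> i %% n = j %% n ->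
  prefix_comparable u v.
Proof.
move=> Hu Hv e; have Hv' := occ_mod (esym e) Hv.
case: (leqP (size u) (size v)) => h.
  exists [::], (drop (size u) v); rewrite cats0.
  rewrite -{1}(cat_take_drop (size u) v); congr (_ ++ _).
  apply: (occ_uniq (occ_take (k:=size u) Hv') Hu); rewrite size_takel //.
exists (drop (size v) u), [::]; rewrite cats0.
rewrite -{2}(cat_take_drop (size v) u); congr (_ ++ _).
apply: (occ_uniq Hv' (occ_take (k:=size v) Hu)); rewrite size_takel //; exact: ltnW.
Qed.

Lemma occ_suffix_comp u v i j : occ u i -> occ v j ->
  (i + size u) %% n = (j + size v) %% n -> suffix_comparable u v.
Proof.
wlog h : u v i j / size u <= size v.
  move=> W Hu Hv e; case: (leqP (size u) (size v)) => h; first exact: W Hu Hv e.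
  have [p [t E]] := W v u j i (ltnW h) Hv Hu (esym e).
  by exists t, p.
move=> Hu Hv e.
exists [::], (take (size v - size u) v) => /=.
rewrite -[LHS](cat_take_drop (size v - size u) v); congr (_ ++ _).
have Hd := occ_drop (leq_subr (size u) (size v)) Hv.
apply: (occ_uniq (i := i) (occ_mod _ Hd) Hu).
  apply/eqP; rewrite -(eqn_modDr (size u)) -addnA subnK // eq_sym; exact/eqP.
by rewrite size_drop subKn.
Qed.

Lemma primitive_shift d : primitive x -> 0 < d < n ->
  ~ (forall t, t < n -> nth x0 x t = nth x0 x ((t + d) %% n)).
Proof.
move=> px /andP [d0 dn] H; apply: px.
have E1 : take d x ++ drop d x = drop d x ++ take d x.
  rewrite cat_take_drop; apply: (eq_from_nth (x0 := x0)).
    by rewrite size_cat size_drop size_takel ?subnK //; exact: ltnW.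
  move=> t ht; rewrite H // nth_cat size_drop.
  case: ltnP => h.
    rewrite nth_drop modn_small; [by rewrite addnC | lia].
  rewrite nth_take; last by lia.
  have -> : t + d = (t - (n - d)) + n by lia.
  by rewrite modnDr modn_small //; lia.
have [z [k [l [e1 e2]]]] := comm_pw E1.
have k0 : 0 < k.
  case: k e1 => // /(congr1 size); rewrite size_takel /=; [lia | exact: ltnW].
have l0 : 0 < l.
  case: l e2 => // /(congr1 size); rewrite size_drop /=; lia.
exists z, (k + l); split; first by lia.
by rewrite -/(pw z (k + l)) pwD -e1 -e2 cat_take_drop.
Qed.

Lemma occ_residue y i j : primitive x -> occ y i -> occ y j -> n <= size y ->
  i %% n = j %% n.
Proof.
move=> px.
wlog le : i j / i %% n <= j %% n.
  move=> W Hi Hj hy; case: (leqP (i %% n) (j %% n)) => h; first exact: W.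
  by symmetry; apply: W => //; exact: ltnW.
move=> Hi Hj hy; apply/eqP; rewrite eqn_leq le /=; rewrite leqNgt; apply/negP => lt.
set i' := i %% n in le lt; set j' := j %% n in le lt.
have i'n : i' < n by rewrite ltn_mod.
have j'n : j' < n by rewrite ltn_mod.
apply: (primitive_shift (d := j' - i') px); first by apply/andP; split; lia.
move=> t ht.
have key : forall s, X (i + s) = X (j + s).
  move=> s; have hs : s %% n < size y by apply: leq_trans hy; rewrite ltn_mod.
  have e1 : X (i + s) = X (i + s %% n) by rewrite /X modnDmr.
  have e2 : X (j + s) = X (j + s %% n) by rewrite /X modnDmr.
  by rewrite e1 e2 -Hi // -Hj.
have := key (t + n - i'); rewrite -X_modD -[X (j + _)]X_modD -/i' -/j'.
have -> : i' + (t + n - i') = t + n by lia.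
have -> : j' + (t + n - i') = (t + (j' - i')) + n by lia.
by rewrite !X_n /X (modn_small ht).
Qed.

End Occ.


Section Morph.
Variables (S : eqType) (G : Type) (h : seq S -> seq G).
Hypothesis hm : is_morphism h.

Lemma hnil : h [::] = [::].
Proof.
have := hm [::] [::]; rewrite cat0s => /(congr1 size); rewrite size_cat.
by case: (h [::]) => //= ? ? ; lia.
Qed.

Lemma hcons c l : h (c :: l) = h [:: c] ++ h l.
Proof. by rewrite -hm. Qed.

Lemma h_pw z k : h (pw z k) = pw (h z) k.
Proof. elim: k => [|k IH]; first exact: hnil. by rewrite pwS hm IH. Qed.

Lemma size_h_pw z k : size (h (pw z k)) = k * size (h z).
Proof. by rewrite h_pw size_pw. Qed.

End Morph.

Lemma split_first (S : eqType) (a : S) s : a \in s ->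
  exists s1 s2, s = s1 ++ a :: s2 /\ a \notin s1.
Proof.
elim: s => // c s IH; rewrite in_cons; case: (eqVneq a c) => [->|ne] /= H.
  by exists [::], s.
have [s1 [s2 [e n1]]] := IH H.
exists (c :: s1), s2; rewrite e; split => //.
by rewrite in_cons negb_or ne.
Qed.

Lemma addmod0 a b n : b %% n = 0 -> (a + b) %% n = a %% n.
Proof. by move=> H; rewrite -modnDmr H addn0. Qed.

Section ThreeFour.
Variables (S : eqType) (G : Type) (h : seq S -> seq G).
Hypothesis hi : inj_morphism h.
Variables (x0 : G) (x : seq G).
Hypothesis xpos : 0 < size x.
Hypothesis px : primitive x.
Variable a : S.
Hypothesis ha : size x <= size (h [:: a]).
Local Notation n := (size x).
Local Notation occ := (occ x0 x).

Lemma hm : is_morphism h. Proof. by case: hi. Qed.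

Lemma occ_a_res r1 r2 i j : occ (h (a :: r1)) i -> occ (h (a :: r2)) j -> i %% n = j %% n.
Proof.
rewrite (hcons hm a r1) (hcons hm a r2) => H1 H2.
have {}H1 := occ_catl H1; have {}H2 := occ_catl H2.
exact: (occ_residue xpos px H1 H2 ha).
Qed.

Variable u : seq S.
Hypothesis au : a \notin u.
Variable P0 : nat.
Hypothesis occU : occ (h (a :: u)) P0.
Hypothesis U0 : size (h (a :: u)) %% n = 0.

Lemma claim r i : occ (h (a :: r)) i ->
  exists j w3, a \notin w3 /\ a :: r = pw (a :: u) j ++ a :: w3.
Proof.
have [N hN] : exists N, size r < N by exists (size r).+1.
elim: N r i hN => // N IH r i hN Hr.
case: (boolP (a \in r)) => ar; last by exists 0, r.
have [r0 [r' [e ar0]]] := split_first ar.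
rewrite e -cat_cons hm in Hr.
have H0 := occ_catl Hr; have H1 := occ_catr Hr.
set L0 := size (h (a :: r0)) in H1.
have rL : (i + L0) %% n = i %% n by apply: occ_a_res H1 H0.
have L00 : L0 %% n = 0.
  have : (i + L0) %% n == (i + 0) %% n by rewrite addn0 rL.
  by rewrite eqn_modDl mod0n => /eqP.
have iP : P0 %% n = i %% n by apply: occ_a_res occU H0.
have E : h (a :: u) ++ h (a :: r0) = h (a :: r0) ++ h (a :: u).
  apply: (occ_uniq (x0:=x0) (x:=x) (i := i)); last by rewrite !size_cat addnC.
    apply: (occ_cat xpos (occ_mod iP occU)).
    by apply: occ_mod H0; rewrite addmod0.
  apply: (occ_cat xpos H0); apply: occ_mod occU.
  by rewrite addmod0.
rewrite -!hm in E; have E2 := proj2 hi _ _ E.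
case: E2 => E3.
have eu : u = r0.
  have si : size u = size r0.
    have := congr1 (index a) E3.
    rewrite !index_cat (negbTE au) (negbTE ar0) /= eqxx !addn0 //.
  by have := congr1 (take (size u)) E3; rewrite take_size_cat // si take_size_cat.
have [|j [w3 [aw3 e3]]] := IH r' (i + L0) _ H1.
  move: hN; rewrite e size_cat /=; lia.
exists j.+1, w3; split => //.
by rewrite e -cat_cons -eu e3 pwS catA.
Qed.

End ThreeFour.

Lemma three_four (S : eqType) (G : Type) (h : seq S -> seq G) (w : seq S) a x r :
  inj_morphism h -> a \in w -> primitive x -> is_pow (h w) x r ->
  size x <= size (h [:: a]) ->
  exists k w1 w2 w3, [/\ a \notin w1, a \notin w2 & a \notin w3] /\
    [/\ w = w1 ++ flatten (nseq k (a :: w2)) ++ a :: w3,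
        suffix_comparable (h w1) (h w2) & prefix_comparable (h w2) (h w3)].
Proof.
move=> hi aw px [xn [p [_ Ew]]] ha.
case: x Ew ha px xn => [|x0 x'] // Ew ha px _.
set x := x0 :: x' in Ew ha px *.
have xpos : 0 < size x by [].
have hm' := hm hi.
have Hw : occ x0 x (h w) 0 by rewrite Ew; exact: occ_pow_frac.
have [w1 [rest [ew aw1]]] := split_first aw.
case: (boolP (a \in rest)) => ar; last first.
  exists 0, w1, [::], rest; split => //; split => //.
    by exists (h w1), [::]; rewrite (hnil hm') cats0.
  by exists [::], (h rest); rewrite (hnil hm') cats0.
have [u [rest2 [er au]]] := split_first ar.
have ew' : w = w1 ++ (a :: u) ++ (a :: rest2) by rewrite ew er.
have Hw' := Hw; rewrite ew' hm' hm' in Hw'.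
have H1 := occ_catl Hw'.
have H2 := occ_catr Hw'.
have HU := occ_catl H2.
have HR := occ_catr H2.
have rU := occ_a_res hi xpos px ha HU HR.
have U0 : size (h (a :: u)) %% size x = 0.
  have : (0 + size (h w1)) + size (h (a :: u)) == (0 + size (h w1)) + 0 %[mod size x].
    by rewrite addn0 rU.
  by rewrite eqn_modDl mod0n => /eqP.
have Hrest : occ x0 x (h (a :: rest)) (0 + size (h w1)).
  move: Hw; rewrite ew hm' => HH; exact: occ_catr HH.
have [k [w3 [aw3 e3]]] := claim hi xpos px ha au HU U0 Hrest.
have Hu : occ x0 x (h u) (0 + size (h w1) + size (h [:: a])).
  move: HU; rewrite (hcons hm') => HH; exact: occ_catr HH.
have sU : size (h (a :: u)) = size (h [:: a]) + size (h u) by rewrite (hcons hm') size_cat.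
exists k, w1, u, w3; split => //; split.
- by rewrite ew e3.
- apply: (occ_suffix_comp H1 Hu).
  by rewrite -addnA -sU (addmod0 _ U0).
- have ew2 : w = w1 ++ (pw (a :: u) k ++ ([:: a] ++ w3)) by rewrite ew e3.
  have Hw3 := Hw; rewrite ew2 hm' hm' hm' in Hw3.
  have H3 := occ_catr (occ_catr (occ_catr Hw3)).
  apply: (occ_prefix_comp Hu H3).
  have kL : size (h (pw (a :: u) k)) %% size x = 0.
    by rewrite (size_h_pw hm') -modnMmr U0 muln0 mod0n.
  by rewrite -[X in _ = X %[mod _]]addnA [size (h (pw _ _)) + _]addnC addnA (addmod0 _ kL).
Qed.


Lemma prim_root (T : Type) (v : seq T) : v <> [::] ->
  exists x j, [/\ primitive x, x <> [::], 0 < j & v = pw x j].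
Proof.
have [N hN] : exists N, size v < N by exists (size v).+1.
elim: N v hN => // N IH v hN vn.
case: (EM (primitive v)) => pv.
  by exists v, 1; split => //; rewrite /pw /= cats0.
have [y [k [k2 ev]]] : exists y k, 2 <= k /\ v = flatten (nseq k y) by apply: contrapT.
have yn : y <> [::].
  by move=> ey; apply: vn; rewrite ev ey; elim: (k) => //.
have sy : 0 < size y by destruct y.
have sv : size v = k * size y by rewrite ev -/(pw y k) size_pw.
have [|x [j [px xn j0 ey]]] := IH y _ yn.
  move: hN; rewrite sv; nia.
exists x, (j * k); split => //; first by rewrite muln_gt0 j0; lia.
by rewrite ev -/(pw y k) ey pwM.
Qed.

Lemma per (T : Type) (c c0 d d0 Y : seq T) m : Y <> [::] -> c0 ++ c = Y ->
  d ++ d0 = Y ++ Y ->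
  is_pow (c ++ pw Y m ++ d) (c ++ c0) ((size (c ++ pw Y m ++ d))%:R / (size Y)%:R)
  /\ m * size Y <= size (c ++ pw Y m ++ d).
Proof.
move=> Yn e1 e2.
have sz : size (c ++ c0) = size Y by rewrite -e1 !size_cat addnC.
split; last by rewrite !size_cat size_pw; lia.
have cn : c ++ c0 <> [::] by move=> E; apply: Yn; apply/size0nil; rewrite -sz E.
split => //; exists (size (c ++ pw Y m ++ d)); split; first by rewrite sz.
symmetry; apply: (pow_frac_pw (rest := d0 ++ c0) (M := m + 3)) => //.
rewrite pwD -!catA [d ++ (d0 ++ c0)]catA e2 -e1 catA pw_shift -!catA; congr (_ ++ _).
by rewrite /pw /= cats0 -!catA.
Qed.

Lemma cat_cancel (T : Type) (K A B : seq T) : K ++ A = K ++ B -> A = B.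
Proof. by move/(congr1 (drop (size K))); rewrite !drop_size_cat. Qed.

Section Construct.
Variables (S G : eqType) (h : seq S -> seq G).
Hypothesis hi : inj_morphism h.
Variables (g0 g1 : G).
Hypothesis g01 : g0 != g1.
Variables (a : S) (s p u : seq G) (N : nat).

Definition phi (o : option G) : seq G := if o is Some g then [:: g; g0] else [:: g0; g1].
Definition Phi (l : seq (option G)) := flatten (map phi l).
Definition Bw := map Some s ++ None :: map Some p.
Definition Uw := map Some u.
Definition Aw := Bw ++ pw (Uw ++ Bw) N.
Definition fG c := if c == a then Aw else map Some (h [:: c]).
Definition Gm (l : seq S) := flatten (map fG l).
Definition hN l := Phi (Gm l).

Lemma Phi_cat l1 l2 : Phi (l1 ++ l2) = Phi l1 ++ Phi l2.
Proof. by rewrite /Phi map_cat flatten_cat. Qed.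

Lemma Gm_cat l1 l2 : Gm (l1 ++ l2) = Gm l1 ++ Gm l2.
Proof. by rewrite /Gm map_cat flatten_cat. Qed.

Lemma Phi_inj : injective Phi.
Proof.
elim=> [|o l IH] [|o' l'] //=; rewrite /Phi /=.
- by case: o'.
- by case: o.
case: o => [g|]; case: o' => [g'|] //= [].
- by move=> -> /IH ->.
- by move=> _ e; move: g01; rewrite e eqxx.
- by move=> _ e; move: g01; rewrite e eqxx.
- by move=> /IH ->.
Qed.

Let hm := hm hi.

Lemma Gm_noa l : a \notin l -> Gm l = map Some (h l).
Proof.
elim: l => [|c l IH]; first by rewrite (hnil hm).
rewrite in_cons negb_or => /andP [ac al].
rewrite /Gm /= -/(Gm l) IH // /fG eq_sym (negbTE ac) (hcons hm c l) map_cat //.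
Qed.

Lemma Gm_a : Gm [:: a] = Aw.
Proof. by rewrite /Gm /= /fG eqxx cats0. Qed.

Lemma None_notin_map (l : seq G) : None \notin map Some l.
Proof. by elim: l. Qed.

Lemma Gm_split l1 l2 : a \notin l1 ->
  Gm (l1 ++ a :: l2) = map Some (h l1) ++ map Some s ++ None :: (map Some p ++ pw (Uw ++ Bw) N ++ Gm l2).
Proof.
move=> al1; rewrite Gm_cat Gm_noa // -cat1s Gm_cat Gm_a /Aw /Bw -!catA //.
Qed.

Lemma index_None l1 l2 : a \notin l1 ->
  index None (Gm (l1 ++ a :: l2)) = size (h l1) + size s.
Proof.
move=> al1; rewrite Gm_split // index_cat (negbTE (None_notin_map _)) size_map.
by rewrite index_cat (negbTE (None_notin_map _)) size_map /= ?eqxx ?addn0.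
Qed.

Lemma Gm_inj : injective Gm.
Proof.
have SI : injective (@Some G) by move=> ? ? [].
move=> l l'.
have [M hM] : exists M, size l < M by exists (size l).+1.
elim: M l l' hM => // M IH l l' hM E.
case: (boolP (a \in l)) => al; case: (boolP (a \in l')) => al'.
- have [l1 [l2 [e1 a1]]] := split_first al.
  have [l1' [l2' [e1' a1']]] := split_first al'.
  have ei := congr1 (index None) E.
  rewrite e1 e1' !index_None // in ei.
  have si : size (h l1) = size (h l1') by lia.
  rewrite e1 e1' !Gm_split // in E.
  have E1 := congr1 (take (size (h l1))) E.
  rewrite take_size_cat ?size_map // si take_size_cat ?size_map // in E1.
  have eh : h l1 = h l1' by exact: (inj_map SI E1).
  have el1 := proj2 hi _ _ eh.
  rewrite -el1 in E.
  have E3 : Gm l2 = Gm l2'.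
    apply: (@cat_cancel _ (map Some (h l1) ++ map Some s ++ [:: None] ++ map Some p ++ pw (Uw ++ Bw) N)).
    by rewrite -!catA /=.
  have e2 : l2 = l2'.
    apply: (IH l2 l2') => //; move: hM; rewrite e1 size_cat /=; lia.
  by rewrite e1 e1' el1 e2.
- have := congr1 (fun z => None \in z) E.
  have [l1 [l2 [e1 a1]]] := split_first al.
  rewrite e1 Gm_split // [in RHS]Gm_noa // (negbTE (None_notin_map _)).
  by rewrite !mem_cat in_cons eqxx !orbT.
- have := congr1 (fun z => None \in z) E.
  have [l1 [l2 [e1 a1]]] := split_first al'.
  rewrite e1 Gm_split // [in LHS]Gm_noa // (negbTE (None_notin_map _)).
  by rewrite !mem_cat in_cons eqxx !orbT.
- rewrite !Gm_noa // in E.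
  exact: (proj2 hi) (inj_map SI E).
Qed.

Lemma hN_inj : inj_morphism hN.
Proof.
split; first by move=> l1 l2; rewrite /hN Gm_cat Phi_cat.
by move=> l1 l2 /Phi_inj /Gm_inj.
Qed.

End Construct.

Section W5Aux.
Local Open Scope ring_scope.
Lemma pigeon (S : eqType) G (h : seq S -> seq G) : is_morphism h ->
  forall w m, (size w * m < size (h w))%N -> exists2 c, c \in w & (m < size (h [:: c]))%N.
Proof.
move=> hm; elim=> [|c w IH] m /=; first by rewrite (hnil hm).
rewrite (hcons hm) size_cat mulSn => H.
case: (ltnP m (size (h [:: c]))) => hc; first by exists c; rewrite ?mem_head.
have [|c' cw hc'] := IH m; first by lia.
by exists c' => //; rewrite in_cons cw orbT.
Qed.

Lemma exp_ge (R : realType) T (u v : seq T) r : is_pow u v r ->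
  ((ratr r : R)%:E <= exponent R u)%E.
Proof. by move=> H; apply: ereal_sup_ubound; exists r => //; exists v. Qed.

Lemma expI_ge (R : realType) (S T : Type) (w : seq S) (h : seq S -> seq T) :
  inj_morphism h -> (exponent R (h w) <= exponent_I R T w)%E.
Proof. by move=> H; apply: ereal_sup_ubound; exists h. Qed.

Lemma pinfty (R : realType) (x : \bar R) : (forall M : R, (M%:E <= x)%E) -> x = +oo%E.
Proof.
case: x => [r| |] // H.
  move: (H (r + 1)); rewrite lee_fin; clear H => h1; exfalso; lra.
by have := H 0; rewrite leeNy_eq.
Qed.

End W5Aux.

Unset Implicit Arguments.
Local Open Scope ring_scope.
Theorem theorem9 (R : realType) (Sigma Gamma : finType)
  (hSigma : (2 <= #|Sigma|)%N) (hGamma : (2 <= #|Gamma|)%N)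
  (w : seq Sigma) (hw : w <> [::]) :
  [<->
    exponent_I R Gamma w = +oo%E;
    ((size w)%:R%:E < exponent_I R Gamma w)%E;
    exists (h : seq Sigma -> seq Gamma) (a : Sigma) (x : seq Gamma) (r : rat),
      [/\ inj_morphism h, a \in w, primitive x, is_pow (h w) x r
        & (size x <= size (h [:: a]))%N];
    exists (k : nat) (a : Sigma) (w1 w2 w3 : seq Sigma)
           (h : seq Sigma -> seq Gamma),
      [/\ a \notin w1, a \notin w2, a \notin w3 & inj_morphism h] /\
      [/\ w = w1 ++ flatten (nseq k (a :: w2)) ++ a :: w3,
          suffix_comparable (h w1) (h w2)
        & prefix_comparable (h w2) (h w3)]].
Proof.
have hm_of : forall h : seq Sigma -> seq Gamma, inj_morphism h -> is_morphism h.
  by move=> h [].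
tfae.
- by move=> ->; exact: ltry.
- move=> /ereal_sup_gt [_ [h hi <-]] /ereal_sup_gt [_ [r [v ipv] <-]].
  rewrite lte_fin.
  case: ipv => vn [p [er ew]].
  have sv : (0 < size v)%N by destruct v.
  rewrite er fmorph_div !rmorph_nat ltr_pdivlMr; last by rewrite ltr0n.
  rewrite -natrM ltr_nat => lt.
  have shw : size (h w) = p by rewrite ew size_takel // -/(pw v p) size_pw leq_pmulr.
  have lt' : (size w * size v < size (h w))%N by rewrite shw.
  have [c cw hc] := pigeon (hm_of h hi) lt'.
  have [x [j [px xn j0 ev]]] := prim_root vn.
  have sx : (0 < size x)%N by destruct x.
  exists h, c, x, (p%:R / (size x)%:R); split => //.
    split => //; exists p; split => //.
    rewrite ew /pow_frac -/(pw v p) -/(pw x p) ev pwM; apply: take_pw.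
      by rewrite -mulnA mulnCA leq_pmulr // muln_gt0 j0 sx.
    by rewrite leq_pmulr.
  by apply: leq_trans (ltnW hc); rewrite ev size_pw leq_pmull.
- move=> [h [a [x [r [hi aw px ipw ha]]]]].
  have [k [w1 [w2 [w3 [[a1 a2 a3] [ew sc pc]]]]]] := three_four hi aw px ipw ha.
  by exists k, a, w1, w2, w3, h.
- move=> [k [a [w1 [w2 [w3 [h [[a1 a2 a3 hi] [ew [p [t sc]] [t' [s pc]]]]]]]]]].
  have [g0 [g1 [_ _ g01]]] := card_gt1P hGamma.
  apply: pinfty => M.
  set N := Num.Def.archi_bound `|M|.
  have hM : M < N%:R := le_lt_trans (ler_norm M) (archi_boundP (normr_ge0 M)).
  set h' := hN h g0 g1 a s p (h w2) N.
  have hi' := hN_inj hi g01 a s p (h w2) N.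
  apply: le_trans (expI_ge R w hi').
  set C := map Some (h w1). set D := map Some (h w3).
  set Y := Bw s p ++ Uw (h w2).
  have GmM : is_morphism (Gm h a s p (h w2) N) by move=> l1 l2; exact: Gm_cat.
  have PhiM : is_morphism (Phi g0 g1) by move=> l1 l2; exact: Phi_cat.
  have eA : Aw s p (h w2) N = pw Y N ++ Bw s p by rewrite /Aw pw_shift.
  have eGw : Gm h a s p (h w2) N w = C ++ pw Y (N.+1 * k + N) ++ (Bw s p ++ D).
    rewrite ew -/(pw (a :: w2) k) !Gm_cat (Gm_noa hi) // (h_pw GmM).
    have -> : Gm h a s p (h w2) N (a :: w2) = pw Y N.+1.
      by rewrite -cat1s Gm_cat Gm_a (Gm_noa hi) // eA pwSr -catA.
    rewrite -[a :: w3]cat1s Gm_cat Gm_a (Gm_noa hi) //.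
    by rewrite pwM pwD eA -!catA.
  have ehw : h' w = Phi g0 g1 C ++ pw (Phi g0 g1 Y) (N.+1 * k + N) ++ Phi g0 g1 (Bw s p ++ D).
    by rewrite /h' /hN eGw -(h_pw PhiM) -!Phi_cat.
  have Yn : Phi g0 g1 Y <> [::].
    rewrite /Y /Bw -catA Phi_cat /Phi /=.
    by case: (flatten _).
  have e1 : Phi g0 g1 (map Some s ++ None :: map Some t) ++ Phi g0 g1 C = Phi g0 g1 Y.
    by rewrite -Phi_cat /Y /Bw /Uw /C -!catA /= -!map_cat sc.
  have e2 : Phi g0 g1 (Bw s p ++ D) ++
            Phi g0 g1 (map Some t' ++ None :: map Some p ++ Uw (h w2)) =
            Phi g0 g1 Y ++ Phi g0 g1 Y.
    rewrite -!Phi_cat; congr Phi.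
    have pc' : forall X, map Some (h w3) ++ (map Some t' ++ X) = map Some (h w2) ++ (map Some s ++ X).
      by move=> X; rewrite !catA -!map_cat pc.
    by rewrite /Y /D /Bw /Uw -!catA /= pc'.
  have [ip sz] := per (N.+1 * k + N) Yn e1 e2.
  rewrite -/h' ehw; apply: (le_trans _ (exp_ge R ip)).
  have sY : (0 < size (Phi g0 g1 Y))%N by destruct (Phi g0 g1 Y).
  rewrite lee_fin fmorph_div !rmorph_nat; apply: (le_trans (ltW hM)).
  rewrite ler_pdivlMr ?ltr0n // -natrM ler_nat.
  apply: leq_trans sz; apply: leq_mul => //; lia.
Qed.
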